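(* Let $\alpha,\beta\in\mathbb{R}$ with $\beta-\alpha-2\neq0$, and set $\mathbf C_{\alpha,\beta}=\frac{(\beta-3)(2\alpha-\beta+1)}{4}$. For every $f\in C_0^\infty((0,\infty))$ (complex-valued), with $f^\#(r)=f''(r)+\frac{\beta-2}{r}f'(r)+\frac{(\beta-3)^2}{4r^2}f(r)$, \[ \left\|\frac{f'}{r}+\frac{\beta-3}{2r^2}f\right\|_{L^2_\beta}^2=\frac{1}{(\beta-\alpha-2)^2}\left\|\mathfrak L_\alpha f+\mathbf C_{\alpha,\beta}\frac{f}{r^2}\right\|_{L^2_\beta}^2-\frac{1}{(\beta-\alpha-2)^2}\left\|f^\#\right\|_{L^2_\beta}^2 . \]
   Context: For $\beta\in\mathbb{R}$, $L^2_\beta$ denotes the weighted space on $(0,\infty)$ with norm $\|g\|_{L^2_\beta}^2=\int_0^\infty |g(r)|^2 r^\beta\,dr$. For $\alpha\in\mathbb{R}$, $\mathfrak L_\alpha$ is the operator $\mathfrak L_\alpha f(r)=f''(r)+\frac{\alpha}{r}f'(r)$. Expressions such as $f/r^2$ denote the function $r\mapsto f(r)/r^2$. *)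

(* Defs.v *)
From Stdlib Require Import Reals.
From Coquelicot Require Import Coquelicot.
Open Scope R_scope.

Definition ReF (f : R -> C) : R -> R := fun t => Re (f t).
Definition ImF (f : R -> C) : R -> R := fun t => Im (f t).

Definition Cder (f : R -> C) : R -> C :=
  fun x => (Derive (ReF f) x, Derive (ImF f) x).

(* f in C_0^infty((0,oo)): smooth on (0,oo) with compact support inside (0,oo).
   (Values at r <= 0 are irrelevant.) *)
Definition smooth_pos (f : R -> C) : Prop :=
  forall (n : nat) (x : R), 0 < x -> ex_derive_n (ReF f) n x /\ ex_derive_n (ImF f) n x.

Definition compact_support_pos (f : R -> C) : Prop :=
  exists a b : R, 0 < a /\ a < b /\
    forall x : R, 0 < x -> (x < a \/ b < x) -> f x = RtoC 0.

Definition Cc_infty_pos (f : R -> C) : Prop := smooth_pos f /\ compact_support_pos f.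

Definition L2w_sq (beta : R) (g : R -> C) : R :=
  RInt_gen (fun r => (Cmod (g r)) ^ 2 * Rpower r beta) (at_right 0) (Rbar_locally p_infty).

Definition frakL (alpha : R) (f : R -> C) : R -> C :=
  fun r => (Cder (Cder f) r + RtoC (alpha / r) * Cder f r)%C.

Definition Cab (alpha beta : R) : R := (beta - 3) * (2 * alpha - beta + 1) / 4.

Definition fsharp (beta : R) (f : R -> C) : R -> C :=
  fun r => (Cder (Cder f) r + RtoC ((beta - 2) / r) * Cder f r
            + RtoC ((beta - 3) ^ 2 / (4 * r ^ 2)) * f r)%C.

(* Main.v *)
Require Import Defs.
From Stdlib Require Import Reals Lra FunctionalExtensionality.
From Coquelicot Require Import Coquelicot.
Open Scope R_scope.

Lemma is_RInt_zero_on (G : R -> R) x y : (forall t, Rmin x y < t < Rmax x y -> G t = 0) -> is_RInt G x y 0.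
Proof.
  intros H. apply is_RInt_ext with (fun _ => 0).
  - intros t Ht. symmetry. auto.
  - pose proof (is_RInt_const (V:=R_NormedModule) x y zero) as E.
    assert (Z : scal (y-x) (zero:R_NormedModule) = 0) by (unfold scal, zero; simpl; unfold mult; simpl; ring).
    rewrite Z in E. exact E.
Qed.

Lemma supp_gen (G : R -> R) c d l : 0<c -> c<d -> is_RInt G c d l ->
  (forall x, 0<x<c -> G x = 0) -> (forall x, d<x -> G x = 0) ->
  is_RInt_gen G (at_right 0) (Rbar_locally p_infty) l.
Proof.
  intros Hc Hcd HI H1 H2 P HP.
  exists (fun x => 0<x<c) (fun y => d<y).
  - exists (mkposreal c Hc). intros y Hy Hy0. split; auto.
    unfold ball in Hy; simpl in Hy; unfold AbsRing_ball, abs, minus, plus, opp in Hy; simpl in Hy.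
    apply Rabs_def2 in Hy. lra.
  - exists d. auto.
  - intros x y Hx Hy. exists l. split; [| apply locally_singleton; auto]. simpl.
    replace l with (plus (0:R_NormedModule) (plus l (0:R_NormedModule))).
    2:{ unfold plus; simpl; ring. }
    apply (is_RInt_Chasles (V:=R_NormedModule)) with c.
    + apply is_RInt_zero_on. intros t Ht. apply H1.
      rewrite Rmin_left in Ht by lra. rewrite Rmax_right in Ht by lra. lra.
    + apply (is_RInt_Chasles (V:=R_NormedModule)) with d; auto.
      apply is_RInt_zero_on. intros t Ht. apply H2.
      rewrite Rmin_left in Ht by lra. lra.
Qed.
Section S.
Variables al be : R.
Definition gx (u u1 : R -> R) r := u1 r * / r + (be-3)/(2*r^2) * u r.
Definition Ax (u u1 u2 : R -> R) r := u2 r + al / r * u1 r + Cab al be / r^2 * u r.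
Definition Sx (u u1 u2 : R -> R) r := u2 r + (be-2)/r * u1 r + (be-3)^2/(4*r^2) * u r.
Definition gx' (u u1 u2 : R -> R) r := u2 r * / r - u1 r / r^2 + (be-3)/2 * (u1 r / r^2 - 2 * u r / r^3).
End S.

Lemma pointwise al be x (u u1 u2 v v1 v2 : R -> R) P : 0 < x ->
  (be-al-2)^2 * ((gx be u u1 x ^2 + gx be v v1 x ^2) * P) =
  (Ax al be u u1 u2 x ^2 + Ax al be v v1 v2 x ^2) * P - (Sx be u u1 u2 x ^2 + Sx be v v1 v2 x ^2) * P
  + (be-al-2) * ((be+1) * P * (gx be u u1 x ^2 + gx be v v1 x ^2) + 2 * x * P * (gx be u u1 x * gx' be u u1 u2 x + gx be v v1 x * gx' be v v1 v2 x)).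
Proof.
  intros Hx. intros. unfold gx, Ax, Sx, gx', Cab. field. lra.
Qed.

Lemma is_RInt_val (f : R -> R) a b l l' : is_RInt f a b l -> l = l' -> is_RInt f a b l'.
Proof. intros H E; subst; exact H. Qed.

Lemma core al be c d (u u1 u2 v v1 v2 : R -> R) :
  be - al - 2 <> 0 -> 0 < c -> c < d ->
  (forall x, 0 < x -> is_derive u x (u1 x)) -> (forall x, 0 < x -> is_derive u1 x (u2 x)) ->
  (forall x, 0 < x -> ex_derive u2 x) ->
  (forall x, 0 < x -> is_derive v x (v1 x)) -> (forall x, 0 < x -> is_derive v1 x (v2 x)) ->
  (forall x, 0 < x -> ex_derive v2 x) ->
  (forall x, 0 < x -> (x <= c \/ d <= x) ->
     u x = 0 /\ u1 x = 0 /\ u2 x = 0 /\ v x = 0 /\ v1 x = 0 /\ v2 x = 0) ->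
  exists l2 l3,
    is_RInt_gen (fun r => (gx be u u1 r ^2 + gx be v v1 r ^2) * Rpower r be)
      (at_right 0) (Rbar_locally p_infty) ((l2 - l3) / (be - al - 2)^2) /\
    is_RInt_gen (fun r => (Ax al be u u1 u2 r ^2 + Ax al be v v1 v2 r ^2) * Rpower r be)
      (at_right 0) (Rbar_locally p_infty) l2 /\
    is_RInt_gen (fun r => (Sx be u u1 u2 r ^2 + Sx be v v1 v2 r ^2) * Rpower r be)
      (at_right 0) (Rbar_locally p_infty) l3.
Proof.
  intros HD Hc Hcd Hu1 Hu2 Hu3 Hv1 Hv2 Hv3 Z.
  set (K := fun r => r * exp (be * ln r) * (gx be u u1 r ^2 + gx be v v1 r ^2)).
  set (K' := fun r => (be+1) * exp (be * ln r) * (gx be u u1 r ^2 + gx be v v1 r ^2)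
      + 2 * r * exp (be * ln r) * (gx be u u1 r * gx' be u u1 u2 r + gx be v v1 r * gx' be v v1 v2 r)).
  set (G2 := fun r => (Ax al be u u1 u2 r ^2 + Ax al be v v1 v2 r ^2) * Rpower r be).
  set (G3 := fun r => (Sx be u u1 u2 r ^2 + Sx be v v1 v2 r ^2) * Rpower r be).
  assert (HK : forall x, 0 < x -> is_derive K x (K' x)).
  { intros x Hx. unfold K, K', gx, gx'.
    specialize (Hu1 x Hx). specialize (Hu2 x Hx). specialize (Hv1 x Hx). specialize (Hv2 x Hx).
    auto_derive.
    - repeat split; try lra; try nra; eexists; eauto.
    - replace (Derive (fun x => u x) x) with (u1 x) by (symmetry; apply is_derive_unique; exact Hu1).
      replace (Derive (fun x => u1 x) x) with (u2 x) by (symmetry; apply is_derive_unique; exact Hu2).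
      replace (Derive (fun x => v x) x) with (v1 x) by (symmetry; apply is_derive_unique; exact Hv1).
      replace (Derive (fun x => v1 x) x) with (v2 x) by (symmetry; apply is_derive_unique; exact Hv2).
      field. lra. }
  assert (HC : forall x, 0 < x -> continuous K' x /\ continuous G2 x /\ continuous G3 x).
  { intros x Hx.
    specialize (Hu1 x Hx). specialize (Hu2 x Hx). specialize (Hv1 x Hx). specialize (Hv2 x Hx).
    specialize (Hu3 x Hx). specialize (Hv3 x Hx).
    repeat split; apply (ex_derive_continuous (K:=R_AbsRing) (V:=R_NormedModule)); unfold K', G2, G3, gx, gx', Ax, Sx, Rpower;
      auto_derive; repeat split; try lra; try nra; first [exact Hu3 | exact Hv3 | eexists; eassumption | (assert (x*(x*(x*1))>0) by (repeat apply Rmult_lt_0_compat; lra); lra)]. }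
  assert (HI2 : is_RInt G2 c d (RInt G2 c d)).
  { apply (RInt_correct (V:=R_CompleteNormedModule)). apply ex_RInt_continuous. intros z Hz.
    rewrite Rmin_left, Rmax_right in Hz by lra. apply HC; lra. }
  assert (HI3 : is_RInt G3 c d (RInt G3 c d)).
  { apply (RInt_correct (V:=R_CompleteNormedModule)). apply ex_RInt_continuous. intros z Hz.
    rewrite Rmin_left, Rmax_right in Hz by lra. apply HC; lra. }
  assert (HIK : is_RInt K' c d 0).
  { pose proof (is_RInt_derive (V:=R_CompleteNormedModule) K K' c d) as H.
    assert (Kc : K c = 0).
    { destruct (Z c) as (e1&e2&e3&e4&e5&e6); [lra|lra|]. unfold K, gx. rewrite e1, e2, e4, e5. ring. }
    assert (Kd : K d = 0).
    { destruct (Z d) as (e1&e2&e3&e4&e5&e6); [lra|lra|]. unfold K, gx. rewrite e1, e2, e4, e5. ring. }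
    rewrite Kc, Kd in H. eapply is_RInt_val; [apply H|].
    - intros x Hx. rewrite Rmin_left, Rmax_right in Hx by lra. apply HK; lra.
    - intros x Hx. rewrite Rmin_left, Rmax_right in Hx by lra. apply HC; lra.
    - unfold minus, plus, opp; simpl. ring. }
  exists (RInt G2 c d), (RInt G3 c d). split; [|split].
  - apply supp_gen with c d; auto.
    + pose proof (is_RInt_scal _ _ _ (/(be-al-2)^2) _ (is_RInt_plus _ _ _ _ _ _ (is_RInt_minus _ _ _ _ _ _ HI2 HI3) (is_RInt_scal _ _ _ (be-al-2) _ HIK))) as H.
      eapply is_RInt_val; [eapply is_RInt_ext; [|exact H]|].
      * intros x Hx. rewrite Rmin_left, Rmax_right in Hx by lra.
        unfold scal, plus, minus, opp, mult; simpl. unfold mult; simpl.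
        unfold G2, G3, K', Rpower.
        assert (D2 : (be-al-2)^2 <> 0) by (apply pow_nonzero; auto).
        apply (Rmult_eq_reg_l ((be-al-2)^2)); auto.
        pose proof (pointwise al be x u u1 u2 v v1 v2 (exp (be * ln x))) as P0.
        simpl in P0 |- *. unfold plus; simpl. rewrite P0 by lra. rewrite <- Rmult_assoc, Rinv_r; [unfold opp; simpl; ring|]. simpl in D2. exact D2.
      * unfold scal, plus, minus, opp, mult; simpl. unfold mult; simpl. unfold plus; simpl. field. simpl in HD; intro E; apply HD; nra.
    + intros x Hx. destruct (Z x) as (e1&e2&e3&e4&e5&e6); [lra|lra|]. unfold gx. rewrite e1, e2, e4, e5. ring.
    + intros x Hx. destruct (Z x) as (e1&e2&e3&e4&e5&e6); [lra|lra|]. unfold gx. rewrite e1, e2, e4, e5. ring.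
  - apply supp_gen with c d; auto.
    + intros x Hx. destruct (Z x) as (e1&e2&e3&e4&e5&e6); [lra|lra|]. unfold G2, Ax. rewrite e1, e2, e3, e4, e5, e6. ring.
    + intros x Hx. destruct (Z x) as (e1&e2&e3&e4&e5&e6); [lra|lra|]. unfold G2, Ax. rewrite e1, e2, e3, e4, e5, e6. ring.
  - apply supp_gen with c d; auto.
    + intros x Hx. destruct (Z x) as (e1&e2&e3&e4&e5&e6); [lra|lra|]. unfold G3, Sx. rewrite e1, e2, e3, e4, e5, e6. ring.
    + intros x Hx. destruct (Z x) as (e1&e2&e3&e4&e5&e6); [lra|lra|]. unfold G3, Sx. rewrite e1, e2, e3, e4, e5, e6. ring.
Qed.

Lemma Cmod2 (z : C) : Cmod z ^ 2 = fst z ^ 2 + snd z ^ 2.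
Proof. unfold Cmod. apply pow2_sqrt. apply Rplus_le_le_0_compat; apply pow2_ge_0. Qed.

Lemma derive_zero (a b : R) (h : R -> R) : 0 < a -> a < b ->
  (forall y, (0 < y < a \/ b < y) -> h y = 0) ->
  forall x, (0 < x < a \/ b < x) -> Derive h x = 0.
Proof.
  intros Ha Hab H x Hx.
  rewrite (Derive_ext_loc h (fun _ => 0)); [apply Derive_const|].
  destruct Hx as [Hx|Hx].
  - assert (He : 0 < Rmin x (a - x)) by (apply Rmin_glb_lt; lra).
    exists (mkposreal _ He). intros y Hy. apply H. left.
    unfold ball in Hy; simpl in Hy; unfold AbsRing_ball, abs, minus, plus, opp in Hy; simpl in Hy.
    apply Rabs_def2 in Hy. pose proof (Rmin_l x (a-x)). pose proof (Rmin_r x (a-x)). lra.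
  - assert (He : 0 < x - b) by lra.
    exists (mkposreal _ He). intros y Hy. apply H. right.
    unfold ball in Hy; simpl in Hy; unfold AbsRing_ball, abs, minus, plus, opp in Hy; simpl in Hy.
    apply Rabs_def2 in Hy. lra.
Qed.

Theorem mainTheorem7 (alpha beta : R) (hab : beta - alpha - 2 <> 0)
  (f : R -> C) (hf : Cc_infty_pos f) :
  L2w_sq beta (fun r => (Cder f r * RtoC (/ r) + RtoC ((beta - 3) / (2 * r ^ 2)) * f r)%C)
  = / (beta - alpha - 2) ^ 2
      * L2w_sq beta (fun r => (frakL alpha f r + RtoC (Cab alpha beta / r ^ 2) * f r)%C)
    - / (beta - alpha - 2) ^ 2 * L2w_sq beta (fsharp beta f).
Proof.
  destruct hf as [Hs [a [b [Ha [Hab Hz]]]]].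
  set (u := ReF f). set (v := ImF f).
  assert (Wu : forall y, (0 < y < a \/ b < y) -> u y = 0).
  { intros y Hy. unfold u, ReF. rewrite Hz; [reflexivity|lra|lra]. }
  assert (Wv : forall y, (0 < y < a \/ b < y) -> v y = 0).
  { intros y Hy. unfold v, ImF. rewrite Hz; [reflexivity|lra|lra]. }
  pose proof (derive_zero a b u Ha Hab Wu) as Wu1.
  pose proof (derive_zero a b v Ha Hab Wv) as Wv1.
  pose proof (derive_zero a b _ Ha Hab Wu1) as Wu2.
  pose proof (derive_zero a b _ Ha Hab Wv1) as Wv2.
  destruct (core alpha beta (a/2) (b+1) u (Derive u) (Derive (Derive u)) v (Derive v) (Derive (Derive v)))
    as (l2 & l3 & H1 & H2 & H3); auto; try lra.
  - intros x Hx. apply Derive_correct. exact (proj1 (Hs 1%nat x Hx)).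
  - intros x Hx. apply Derive_correct. exact (proj1 (Hs 2%nat x Hx)).
  - intros x Hx. exact (proj1 (Hs 3%nat x Hx)).
  - intros x Hx. apply Derive_correct. exact (proj2 (Hs 1%nat x Hx)).
  - intros x Hx. apply Derive_correct. exact (proj2 (Hs 2%nat x Hx)).
  - intros x Hx. exact (proj2 (Hs 3%nat x Hx)).
  - intros x Hx Hx'. assert (W : 0 < x < a \/ b < x) by lra.
    repeat split; auto.
  - unfold L2w_sq.
    assert (E1 : (fun r => Cmod (Cder f r * RtoC (/ r) + RtoC ((beta - 3) / (2 * r ^ 2)) * f r)%C ^ 2 * Rpower r beta)
       = (fun r => (gx beta u (Derive u) r ^2 + gx beta v (Derive v) r ^2) * Rpower r beta)).
    { apply functional_extensionality; intro r. rewrite Cmod2.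
      unfold gx, Cder, Cmult, Cplus, RtoC. fold u v. unfold u, v, ReF, ImF, Re, Im. cbn [fst snd]. ring. }
    assert (E2 : (fun r => Cmod (frakL alpha f r + RtoC (Cab alpha beta / r ^ 2) * f r)%C ^ 2 * Rpower r beta)
       = (fun r => (Ax alpha beta u (Derive u) (Derive (Derive u)) r ^2 + Ax alpha beta v (Derive v) (Derive (Derive v)) r ^2) * Rpower r beta)).
    { apply functional_extensionality; intro r. rewrite Cmod2.
      unfold Ax, frakL, Cder, Cmult, Cplus, RtoC. fold u v. unfold u, v, ReF, ImF, Re, Im. cbn [fst snd].
      change (Derive (fun t => Derive (fun t0 => fst (f t0)) t)) with (Derive (Derive (fun t => fst (f t)))).
      change (Derive (fun t => Derive (fun t0 => snd (f t0)) t)) with (Derive (Derive (fun t => snd (f t)))).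
      ring. }
    assert (E3 : (fun r => Cmod (fsharp beta f r) ^ 2 * Rpower r beta)
       = (fun r => (Sx beta u (Derive u) (Derive (Derive u)) r ^2 + Sx beta v (Derive v) (Derive (Derive v)) r ^2) * Rpower r beta)).
    { apply functional_extensionality; intro r. rewrite Cmod2.
      unfold Sx, fsharp, Cder, Cmult, Cplus, RtoC. fold u v. unfold u, v, ReF, ImF, Re, Im. cbn [fst snd].
      change (Derive (fun t => Derive (fun t0 => fst (f t0)) t)) with (Derive (Derive (fun t => fst (f t)))).
      change (Derive (fun t => Derive (fun t0 => snd (f t0)) t)) with (Derive (Derive (fun t => snd (f t)))).
      ring. }
    rewrite E1, E2, E3.
    rewrite (is_RInt_gen_unique _ _ H1), (is_RInt_gen_unique _ _ H2), (is_RInt_gen_unique _ _ H3).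
    field. intro E; apply hab; nra.
Qed.
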